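(* Let $(\mathsf C,\mathrm W)$ be a 2-weighted 2-category. Then the interleaving distance $d_{\mathsf C,\mathrm W}$ is an extended pseudometric on the class of objects $\mathsf C_0$.
   Context: A Lawvere 2-weight on a (strict) 2-category $\mathsf C$ is a pair $\mathrm W=(\mathrm W_1,\mathrm W_2)$ of functions $\mathrm W_1$ from 1-morphisms to $\mathbb R_{\ge0}$ and $\mathrm W_2$ from 2-morphisms to $\mathbb R_{\ge0}$ such that $\mathrm W_1(1_A)=0$ for all objects $A$, $\mathrm W_2(1_f)=0$ for all 1-morphisms $f$, $\mathrm W_1(gf)\le\mathrm W_1(g)+\mathrm W_1(f)$ for composable 1-morphisms, and for 2-morphisms $\mathrm W_2(\beta\alpha)\le\mathrm W_2(\beta)+\mathrm W_2(\alpha)$ (vertical composition) and $\mathrm W_2(\gamma\bullet\alpha)\le\mathrm W_2(\gamma)+\mathrm W_2(\alpha)$ (horizontal composition). A 2-weighted 2-category is such a pair $(\mathsf C,\mathrm W)$. For $A,B\in\mathsf C_0$ and $t\ge0$, $A$ and $B$ are $t$-interleaved if there exist 1-morphisms $g:A\to B$, $h:B\to A$ and 2-morphisms $\alpha:1_A\Rightarrow hg$, $\beta:1_B\Rightarrow gh$ with $\max\{\mathrm W_1(g),\mathrm W_1(h),\mathrm W_2(\alpha),\mathrm W_2(\beta)\}\le t$. Then $d_{\mathsf C,\mathrm W}(A,B)=\inf\{t\ge0: A,B\ t\text{-interleaved}\}$, with $\inf\emptyset=\infty$. An extended pseudometric is $[0,\infty]$-valued, zero on the diagonal, symmetric and satisfies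 the triangle inequality. *)

(* Defs.v *)
From Stdlib Require Import Reals.
From Coquelicot Require Import Coquelicot.
Open Scope R_scope.

Definition cast2 {X Y : Type} (P : X -> Y -> Type) {a a' : X} {b b' : Y}
  (e1 : a = a') (e2 : b = b') (x : P a b) : P a' b' :=
  match e1 in _ = a1 return P a1 b' with
  | eq_refl => match e2 in _ = b1 return P a b1 with eq_refl => x end
  end.

Record TwoCat := {
  obj : Type;
  hom : obj -> obj -> Type;
  id1 : forall A, hom A A;
  comp1 : forall A B C, hom B C -> hom A B -> hom A C;
  cell : forall A B, hom A B -> hom A B -> Type;
  id2 : forall A B (f : hom A B), cell A B f f;
  vcomp : forall A B (f g h : hom A B), cell A B g h -> cell A B f g -> cell A B f h;
  hcomp : forall A B C (g g' : hom B C) (f f' : hom A B),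
      cell B C g g' -> cell A B f f' -> cell A C (comp1 A B C g f) (comp1 A B C g' f');
  comp1_assoc : forall A B C D (h : hom C D) (g : hom B C) (f : hom A B),
      comp1 A C D h (comp1 A B C g f) = comp1 A B D (comp1 B C D h g) f;
  comp1_idl : forall A B (f : hom A B), comp1 A B B (id1 B) f = f;
  comp1_idr : forall A B (f : hom A B), comp1 A A B f (id1 A) = f;
  vcomp_assoc : forall A B (f g h k : hom A B) (g1 : cell A B h k) (b1 : cell A B g h)
      (a1 : cell A B f g),
      vcomp A B f h k g1 (vcomp A B f g h b1 a1) = vcomp A B f g k (vcomp A B g h k g1 b1) a1;
  vcomp_idl : forall A B (f g : hom A B) (a1 : cell A B f g), vcomp A B f g g (id2 A B g) a1 = a1;
  vcomp_idr : forall A B (f g : hom A B) (a1 : cell A B f g), vcomp A B f f g a1 (id2 A B f) = a1;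
  (* horizontal composition: associativity and units (strict, up to transport) *)
  hcomp_assoc : forall A B C D (h h' : hom C D) (g g' : hom B C) (f f' : hom A B)
      (c1 : cell C D h h') (b1 : cell B C g g') (a1 : cell A B f f'),
      cast2 (cell A D) (comp1_assoc A B C D h g f) (comp1_assoc A B C D h' g' f')
        (hcomp A C D h h' (comp1 A B C g f) (comp1 A B C g' f') c1 (hcomp A B C g g' f f' b1 a1))
      = hcomp A B D (comp1 B C D h g) (comp1 B C D h' g') f f' (hcomp B C D h h' g g' c1 b1) a1;
  hcomp_idl : forall A B (f f' : hom A B) (a1 : cell A B f f'),
      cast2 (cell A B) (comp1_idl A B f) (comp1_idl A B f')
        (hcomp A B B (id1 B) (id1 B) f f' (id2 B B (id1 B)) a1) = a1;
  hcomp_idr : forall A B (f f' : hom A B) (a1 : cell A B f f'),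
      cast2 (cell A B) (comp1_idr A B f) (comp1_idr A B f')
        (hcomp A A B f f' (id1 A) (id1 A) a1 (id2 A A (id1 A))) = a1;
  hcomp_id2 : forall A B C (g : hom B C) (f : hom A B),
      hcomp A B C g g f f (id2 B C g) (id2 A B f) = id2 A C (comp1 A B C g f);
  interchange : forall A B C (g g' g'' : hom B C) (f f' f'' : hom A B)
      (c1 : cell B C g g') (d1 : cell B C g' g'') (a1 : cell A B f f') (b1 : cell A B f' f''),
      hcomp A B C g g'' f f'' (vcomp B C g g' g'' d1 c1) (vcomp A B f f' f'' b1 a1)
      = vcomp A C (comp1 A B C g f) (comp1 A B C g' f') (comp1 A B C g'' f'')
          (hcomp A B C g' g'' f' f'' d1 b1) (hcomp A B C g g' f f' c1 a1)
}.

Arguments id1 {t} A.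
Arguments comp1 {t A B C} _ _.
Arguments cell {t A B} _ _.
Arguments id2 {t A B} f.
Arguments vcomp {t A B f g h} _ _.
Arguments hcomp {t A B C g g' f f'} _ _.

Record Lawvere2Weight (C : TwoCat) := {
  W1 : forall A B : obj C, hom C A B -> R;
  W2 : forall (A B : obj C) (f g : hom C A B), cell f g -> R;
  W1_nonneg : forall A B (f : hom C A B), 0 <= W1 A B f;
  W2_nonneg : forall A B (f g : hom C A B) (a : cell f g), 0 <= W2 A B f g a;
  W1_id : forall A, W1 A A (id1 A) = 0;
  W2_id : forall A B (f : hom C A B), W2 A B f f (id2 f) = 0;
  W1_comp : forall A B D (g : hom C B D) (f : hom C A B),
      W1 A D (comp1 g f) <= W1 B D g + W1 A B f;
  W2_vcomp : forall A B (f g h : hom C A B) (b : cell g h) (a : cell f g),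
      W2 A B f h (vcomp b a) <= W2 A B g h b + W2 A B f g a;
  W2_hcomp : forall A B D (g g' : hom C B D) (f f' : hom C A B)
      (c : cell g g') (a : cell f f'),
      W2 A D (comp1 g f) (comp1 g' f') (hcomp c a) <= W2 B D g g' c + W2 A B f f' a
}.

Arguments W1 {C} l {A B} f.
Arguments W2 {C} l {A B f g} a.

Definition interleaved (C : TwoCat) (W : Lawvere2Weight C) (A B : obj C) (t : R) : Prop :=
  exists (g : hom C A B) (h : hom C B A)
         (a : cell (id1 A) (comp1 h g)) (b : cell (id1 B) (comp1 g h)),
    W1 W g <= t /\ W1 W h <= t /\ W2 W a <= t /\ W2 W b <= t.

(* Interleaving distance: inf {t >= 0 | A, B t-interleaved}, inf of the empty set = +oo. *)
Definition interleaving_dist (C : TwoCat) (W : Lawvere2Weight C) (A B : obj C) : Rbar :=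
  Glb_Rbar (fun t => 0 <= t /\ interleaved C W A B t).

Definition is_ext_pseudometric {X : Type} (d : X -> X -> Rbar) : Prop :=
  (forall x y, Rbar_le (Finite 0) (d x y)) /\
  (forall x, d x x = Finite 0) /\
  (forall x y, d x y = d y x) /\
  (forall x y z, Rbar_le (d x z) (Rbar_plus (d x y) (d y z))).

(* Main.v *)
Require Import Defs.
From Stdlib Require Import Reals Lra Classical.
From Coquelicot Require Import Coquelicot.

Lemma W2_cast (C : TwoCat) (W : Lawvere2Weight C) (A B : obj C)
  (f f' g g' : hom C A B) (e1 : f = f') (e2 : g = g') (x : cell f g) :
  W2 W (cast2 (@cell C A B) e1 e2 x) = W2 W x.
Proof. destruct e1, e2. reflexivity. Qed.

Lemma compose_cell (C : TwoCat) (W : Lawvere2Weight C) (A B D : obj C)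
  (g1 : hom C A B) (h1 : hom C B A) (g2 : hom C B D) (h2 : hom C D B)
  (a1 : cell (id1 A) (comp1 h1 g1)) (a2 : cell (id1 B) (comp1 h2 g2)) :
  exists a : cell (id1 A) (comp1 (comp1 h1 h2) (comp1 g2 g1)),
    W2 W a <= W2 W a1 + W2 W a2.
Proof.
  set (c := hcomp (id2 h1) (hcomp a2 (id2 g1))).
  assert (e1 : comp1 h1 (comp1 (id1 B) g1) = comp1 h1 g1)
    by (rewrite comp1_idl; reflexivity).
  assert (e2 : comp1 h1 (comp1 (comp1 h2 g2) g1) = comp1 (comp1 h1 h2) (comp1 g2 g1))
    by (rewrite <- !comp1_assoc; reflexivity).
  exists (vcomp (cast2 (@cell C A A) e1 e2 c) a1).
  eapply Rle_trans; [apply W2_vcomp|].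
  rewrite W2_cast.
  assert (H1 := W2_hcomp C W _ _ _ _ _ _ _ (id2 h1) (hcomp a2 (id2 g1))).
  assert (H2 := W2_hcomp C W _ _ _ _ _ _ _ a2 (id2 g1)).
  rewrite W2_id in H1, H2. unfold c. lra.
Qed.

Lemma interleaved_sym C W A B t : interleaved C W A B t -> interleaved C W B A t.
Proof.
  intros (g & h & a & b & H1 & H2 & H3 & H4).
  exists h, g, b, a. tauto.
Qed.

Lemma interleaved_trans C W A B D s t :
  interleaved C W A B s -> interleaved C W B D t -> interleaved C W A D (s + t).
Proof.
  intros (g1 & h1 & a1 & b1 & H1 & H2 & H3 & H4)
         (g2 & h2 & a2 & b2 & K1 & K2 & K3 & K4).
  destruct (compose_cell C W _ _ _ g1 h1 g2 h2 a1 a2) as [a Ha].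
  destruct (compose_cell C W _ _ _ h2 g2 h1 g1 b2 b1) as [b Hb].
  exists (comp1 g2 g1), (comp1 h1 h2), a, b.
  pose proof (W1_comp C W _ _ _ g2 g1).
  pose proof (W1_comp C W _ _ _ h1 h2).
  repeat split; lra.
Qed.

Lemma dist_nonneg C W A B : Rbar_le (Finite 0) (interleaving_dist C W A B).
Proof.
  unfold interleaving_dist.
  destruct (Glb_Rbar_correct (fun t => 0 <= t /\ interleaved C W A B t)) as [_ H].
  apply H. intros x [Hx _]. simpl. exact Hx.
Qed.

Lemma approx (E : R -> Prop) (l : R) (eps : R) :
  is_glb_Rbar E (Finite l) -> 0 < eps -> exists s, E s /\ s < l + eps.
Proof.
  intros [Hlb Hg] Heps.
  apply NNPP. intro N.
  assert (Rbar_le (Finite (l + eps)) (Finite l)).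
  { apply Hg. intros x Ex. simpl. apply Rnot_lt_le. intro Hlt. apply N. eauto. }
  simpl in H. lra.
Qed.

Theorem theorem5p3 (C : TwoCat) (W : Lawvere2Weight C) :
  is_ext_pseudometric (interleaving_dist C W).
Proof.
  split; [|split; [|split]].
  - apply dist_nonneg.
  - intro A. apply Rbar_le_antisym; [|apply dist_nonneg].
    unfold interleaving_dist.
    destruct (Glb_Rbar_correct (fun t => 0 <= t /\ interleaved C W A A t)) as [H _].
    apply H. split; [lra|].
    assert (e : comp1 (id1 A) (id1 A) = id1 A) by apply comp1_idl.
    unfold interleaved. exists (id1 A), (id1 A).
    revert e. generalize (comp1 (id1 A) (id1 A)). intros f e. subst f.
    exists (id2 (id1 A)), (id2 (id1 A)).
    rewrite W1_id, W2_id. repeat split; lra.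
  - intros x y. unfold interleaving_dist. apply Glb_Rbar_eqset.
    intro t; split; intros [H1 H2]; split; auto; apply interleaved_sym; auto.
  - intros x y z.
    pose proof (dist_nonneg C W x y) as N1.
    pose proof (dist_nonneg C W y z) as N2.
    pose proof (Glb_Rbar_correct (fun t => 0 <= t /\ interleaved C W x y t)) as G1.
    pose proof (Glb_Rbar_correct (fun t => 0 <= t /\ interleaved C W y z t)) as G2.
    pose proof (Glb_Rbar_correct (fun t => 0 <= t /\ interleaved C W x z t)) as G3.
    pose proof (dist_nonneg C W x z) as N3.
    unfold interleaving_dist in *.
    destruct (Glb_Rbar (fun t => 0 <= t /\ interleaved C W x y t)) as [d1| |];
      [| destruct (Glb_Rbar (fun t => 0 <= t /\ interleaved C W y z t)); simpl in N2;
         try contradiction;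
         destruct (Glb_Rbar (fun t => 0 <= t /\ interleaved C W x z t)); simpl; auto
       | simpl in N1; contradiction].
    destruct (Glb_Rbar (fun t => 0 <= t /\ interleaved C W y z t)) as [d2| |];
      [| destruct (Glb_Rbar (fun t => 0 <= t /\ interleaved C W x z t)); simpl; auto
       | simpl in N2; contradiction].
    simpl.
    assert (Hk : forall eps, 0 < eps ->
      Rbar_le (Glb_Rbar (fun t => 0 <= t /\ interleaved C W x z t)) (Finite (d1 + d2 + eps))).
    { intros eps He.
      destruct (approx _ _ (eps/2) G1) as [s [[Hs0 Hs] Hs']]; [lra|].
      destruct (approx _ _ (eps/2) G2) as [t [[Ht0 Ht] Ht']]; [lra|].
      apply Rbar_le_trans with (Finite (s + t)).
      - apply (proj1 G3). split; [lra|]. eapply interleaved_trans; eauto.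
      - simpl. lra. }
    destruct (Glb_Rbar (fun t => 0 <= t /\ interleaved C W x z t)) as [d3| |].
    + simpl in *. apply Rnot_lt_le. intro Hlt.
      specialize (Hk ((d3 - (d1 + d2)) / 2)). simpl in Hk.
      assert (0 < (d3 - (d1 + d2)) / 2) by lra. specialize (Hk H). lra.
    + specialize (Hk 1 Rlt_0_1). simpl in Hk. contradiction.
    + simpl in N3. contradiction.
Qed.
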